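(* Let $\mathcal X$ be a Banach space and $0<T\le1$. Let $J:\{(v,u):0\le u\le v\le T\}\to\mathcal X$ be continuous with $J_{u,u}=0$, and for $u\le m\le v$ set $\delta J_{v,m,u}=J_{v,u}-J_{v,m}-J_{m,u}$. Fix $0\le s\le t\le T$ and suppose that the limit $$\mathscr J_{t,s}=\lim_{n\to\infty}\sum_{[u,v]\in\pi_n(s,t)}J_{v,u}$$ exists in $\mathcal X$, where $\pi_n(s,t)$ is the $n$-th dyadic partition of $[s,t]$ into $2^n$ intervals of length $2^{-n}(t-s)$. Let $l\in\mathbb N$. For $i=1,\dots,l$, let $\mu_i>1$, $0\le\lambda_i<\mu_i$, $\nu_i\in[0,\mu_i]$, $\varepsilon_i\in[0,1)$ and $A_i\ge0$ be such that $$|\delta J_{v,m,u}|_{\mathcal X}\le\sum_{i=1}^lA_i|t-u|^{-\lambda_i}|u-m|^{\nu_i}|m-v|^{\mu_i-\nu_i}m^{-\varepsilon_i}$$ for all $s\le u\le m\le v\le t$ with $m>0$. Let $\omega\in[0,\max_i\varepsilon_i]$ be such that $(\varepsilon_i-\omega)_+<\mu_i-\lambda_i$ for each $i=1,\dots,l$. Then $$s^\omega|\mathscr J_{t,s}-J_{t,s}|_{\mathcal X}\lesssim\sum_{i=1}^lA_i|t-s|^{\mu_i-\lambda_i-(\varepsilon_i-\omega)_+},$$ with an implied constant depending only on the exponents $\mu_i,\lambda_i,\nu_i,\varepsilon_i,\omega$.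
   Context: Here $x_+=\max(x,0)$. The $n$-th dyadic partition is $$\pi_n(s,t)=\{s\le s+2^{-n}(t-s)\le\dots\le t-2^{-n}(t-s)\le t\},$$ and $[u,v]\in\pi_n(s,t)$ ranges over its consecutive intervals. *)

(* Defs.v *)
From HB Require Import structures.
From mathcomp Require Import all_boot all_order all_algebra.
From mathcomp Require Import all_classical all_reals all_analysis.
Set Implicit Arguments. Unset Strict Implicit. Unset Printing Implicit Defensive.
Import Order.TTheory GRing.Theory Num.Theory.
Import numFieldNormedType.Exports.
Local Open Scope classical_set_scope.
Local Open Scope ring_scope.

Definition dyadic_pt {R : realType} (s t : R) (n k : nat) : R :=
  s + (k%:R * (t - s)) / (2 ^+ n).

Definition dyadic_sum {R : realType} {X : normedModType R}
  (J : R -> R -> X) (s t : R) (n : nat) : X :=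
  \sum_(k < 2 ^ n) J (dyadic_pt s t n k.+1) (dyadic_pt s t n k).

Definition deltaJ {R : realType} {X : normedModType R}
  (J : R -> R -> X) (v m u : R) : X := J v u - J v m - J m u.

Definition pospart {R : realType} (x : R) : R := Num.max x 0.

(* Main.v *)
Require Import Defs.
From HB Require Import structures.
From mathcomp Require Import all_boot all_order all_algebra.
From mathcomp Require Import all_classical all_reals all_analysis.
From mathcomp Require Import ring lra zify.
Import Order.TTheory GRing.Theory Num.Theory.
Import numFieldNormedType.Exports.
Local Open Scope classical_set_scope.
Local Open Scope ring_scope.

Section Aux.
Context {R : realType}.

Lemma wamgm (x c : R) : 0 <= x -> 0 <= c < 1 ->
  x `^ (1 - c) * (x + 1) `^ c <= x + c.
Proof.
move=> x0 /andP[c0 c1].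
have [->|cn0] := eqVneq c 0.
  by rewrite subr0 powRr0 mulr1 addr0 powRr1.
have cp : 0 < c by rewrite lt_neqAle eq_sym cn0.
have c1p : 0 < 1 - c by rewrite subr_gt0.
have p0 : 0 < (1 - c)^-1 by rewrite invr_gt0.
have q0 : 0 < c^-1 by rewrite invr_gt0.
have := @conjugate_powR R (x `^ (1 - c)) ((x + 1) `^ c) (1 - c)^-1 c^-1
  (@powR_ge0 R _ _) (@powR_ge0 R _ _) p0 q0.
rewrite !invrK -!powRrM mulfV ?gt_eqF// mulfV ?gt_eqF// !powRr1 ?addr_ge0//.
rewrite subrK => /(_ erefl) H; apply: (le_trans H).
by rewrite le_eqVlt; apply/orP; left; apply/eqP; ring.
Qed.

Lemma psum (c : R) (N : nat) : 0 <= c < 1 ->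
  \sum_(0 <= k < N) (k.+1%:R : R) `^ (- c) <= N%:R `^ (1 - c) / (1 - c).
Proof.
move=> /andP[c0 c1]; have c1p : 0 < 1 - c by rewrite subr_gt0.
elim: N => [|N IH].
  by rewrite big_geq// powR0 ?mul0r// subr_eq0 gt_eqF.
rewrite big_nat_recr//=.
set x : R := N%:R.
have x0 : 0 <= x by rewrite /x ler0n.
have -> : (N.+1%:R : R) = x + 1 by rewrite /x -natr1.
have y0 : 0 < x + 1 by rewrite ltr_wpDl.
set P := (x + 1) `^ (- c).
have e1 : (x + 1) `^ (1 - c) = (x + 1) * P.
  rewrite /P powRD; last by apply/implyP=> _; rewrite gt_eqF.
  by rewrite powRr1// ltW.
have e2 : (x + 1) `^ c * P = 1.
  rewrite /P -powRD; last by apply/implyP=> _; rewrite gt_eqF.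
  by rewrite subrr powRr0.
have H : x `^ (1 - c) * (x + 1) `^ c <= x + c by apply: wamgm => //; rewrite c0 c1.
have H2 : x `^ (1 - c) <= (x + c) * P.
  have := ler_wpM2r (powR_ge0 (x+1) (-c)) H.
  by rewrite -mulrA -/P e2 mulr1.
rewrite e1 ler_pdivlMr//.
have H3 : (\sum_(0 <= i < N) (i.+1%:R : R) `^ (- c)) * (1 - c) <= x `^ (1 - c).
  by rewrite -ler_pdivlMr.
move: H3 H2; set S := \sum_(_ <= _ < _) _; nra.
Qed.

Lemma powN_le (a b r : R) : 0 < a -> a <= b -> 0 <= r -> b `^ (- r) <= a `^ (- r).
Proof.
move=> a0 ab r0; rewrite !powRN lef_pV2 ?posrE ?powR_gt0 ?(lt_le_trans a0)//.
by apply: ge0_ler_powR => //; rewrite nnegrE ltW// (lt_le_trans a0).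
Qed.

Lemma powN_ge1 (a r r' : R) : 1 <= a -> r' <= r -> a `^ (- r) <= a `^ (- r').
Proof. by move=> a1 rr; apply: ler_powR => //; rewrite lerN2. Qed.

Definition Kc (al b : R) := (2^-1) `^ (- al) / (1 - b) + (2^-1) `^ (- b) / (1 - al).

Lemma ssum (al b : R) (N : nat) : 0 <= al < 1 -> 0 <= b < 1 -> (0 < N)%N ->
  \sum_(0 <= k < N) ((N - k)%:R : R) `^ (- al) * (k.+1%:R : R) `^ (- b)
  <= Kc al b * N%:R `^ (1 - al - b).
Proof.
move=> /andP[a0 a1] /andP[b0 b1] N0.
set x : R := N%:R.
have x0 : 0 < x by rewrite /x ltr0n.
have hx : 0 < x * 2^-1 by rewrite mulr_gt0.
apply: (@le_trans _ _ (\sum_(0 <= k < N) ((x * 2^-1) `^ (- al) * (k.+1%:R : R) `^ (- b)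
   + (x * 2^-1) `^ (- b) * ((N - k)%:R : R) `^ (- al)))).
  apply: ler_sum_nat => k /andP[_ kN].
  have [h|h] := lerP (x * 2^-1) ((N - k)%:R).
    apply: ler_wpDr; first by rewrite mulr_ge0 ?powR_ge0.
    by rewrite ler_wpM2r ?powR_ge0// powN_le.
  apply: ler_wpDl; first by rewrite mulr_ge0 ?powR_ge0.
  rewrite mulrC ler_wpM2r ?powR_ge0// powN_le//.
  have : (N - k + k.+1 = N.+1)%N by lia.
  move/(congr1 (fun n : nat => (n%:R : R))); rewrite natrD => e.
  have e2 : x + 1 = (N - k)%:R + k.+1%:R by rewrite /x natr1 e.
  lra.
rewrite big_split /= -!mulr_sumr.
have -> : \sum_(0 <= i < N) ((N - i)%:R : R) `^ (- al) = \sum_(0 <= i < N) (i.+1%:R : R) `^ (- al).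
  rewrite big_nat_rev; apply: eq_big_nat => i /andP[_ iN].
  by congr (_ `^ _); congr (_%:R); lia.
have bb : 0 <= b < 1 by rewrite b0 b1.
have aa : 0 <= al < 1 by rewrite a0 a1.
apply: (le_trans (lerD (ler_wpM2l (powR_ge0 _ _) (psum b N bb))
                       (ler_wpM2l (powR_ge0 _ _) (psum al N aa)))).
rewrite /Kc mulrDl -/x.
have pM : forall r, (x * 2^-1) `^ r = x `^ r * 2^-1 `^ r.
  by move=> r; rewrite powRM// ltW.
rewrite !pM.
have pD : forall p q : R, x `^ (p + q) = x `^ p * x `^ q.
  by move=> p q; rewrite powRD//; apply/implyP => _; rewrite gt_eqF.
have e : 1 - al - b = - al + (1 - b) by ring.
have e' : 1 - al - b = - b + (1 - al) by ring.
apply: lerD; rewrite le_eqVlt; apply/orP; left; apply/eqP.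
  rewrite e (pD (- al)); field; rewrite subr_eq0 gt_eqF//.
rewrite e' (pD (- b)); field; rewrite subr_eq0 gt_eqF//.
Qed.

Lemma sm_le (s m om eps : R) : 0 <= s -> s <= m -> 0 < m -> m <= 1 -> 0 <= om ->
  s `^ om * m `^ (- eps) <= m `^ (- pospart (eps - om)).
Proof.
move=> s0 sm m0 m1 om0.
have h1 : s `^ om * m `^ (- eps) <= m `^ om * m `^ (- eps).
  rewrite ler_wpM2r ?powR_ge0//; apply: ge0_ler_powR => //; rewrite nnegrE ?ltW//.
apply: (le_trans h1); rewrite -powRD; last by apply/implyP => _; rewrite gt_eqF.
rewrite /pospart; have [e|e] := leP (eps - om) 0.
  rewrite oppr0 powRr0.
  have -> : 1 = m `^ 0 by rewrite powRr0.
  by apply: ger_powR; [rewrite m0 m1 | lra].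
by rewrite opprB addrC.
Qed.

Lemma plem (mu lam nu eps om al : R) (s h t u m v : R) (N k : nat) :
  0 <= nu <= mu -> 0 <= al <= lam -> 0 <= om -> 0 < h -> 0 <= s -> t <= 1 -> (k < N)%N ->
  t = s + N%:R * h -> u = s + k%:R * h -> m = s + (k%:R + 2^-1) * h -> v = s + k.+1%:R * h ->
  s `^ om * (`|t - u| `^ (- lam) * `|u - m| `^ nu * `|m - v| `^ (mu - nu) * m `^ (- eps))
  <= (2^-1) `^ (mu - pospart (eps - om)) *
     (((N - k)%:R : R) `^ (- al) * (k.+1%:R : R) `^ (- pospart (eps - om))) *
     h `^ (mu - lam - pospart (eps - om)).
Proof.
move=> /andP[nu0 numu] /andP[al0 allam] om0 h0 s0 t1 kN ht hu hm hv.
set b := pospart (eps - om).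
have b0 : 0 <= b by rewrite /b /pospart le_max lexx orbT.
have NkE : ((N - k)%:R : R) = N%:R - k%:R by rewrite natrB// ltnW.
have Nk1 : 1 <= ((N - k)%:R : R) by rewrite ler1n subn_gt0.
have tu : `|t - u| = (N - k)%:R * h.
  rewrite NkE ht hu ger0_norm; first ring.
  have kNr : (k%:R : R) <= N%:R by rewrite ler_nat ltnW.
  nra.
have um : `|u - m| = h * 2^-1.
  rewrite hu hm ler0_norm; first lra. lra.
have mv : `|m - v| = h * 2^-1.
  have kk : (k.+1%:R : R) = k%:R + 1 by rewrite natr1.
  rewrite hm hv kk ler0_norm; first lra. lra.
have k0 : 0 <= (k%:R : R) by rewrite ler0n.
have m0 : 0 < m by rewrite hm; nra.
have sm : s <= m by rewrite hm; nra.
have m1 : m <= 1.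
  have : (k%:R : R) + 2^-1 <= N%:R.
    have : (k.+1 <= N)%N := kN. rewrite -(ler_nat R) -natr1; lra.
  move=> kN'; rewrite hm; move: t1; rewrite ht; nra.
have h2 : 0 < h * 2^-1 by rewrite mulr_gt0.
have pM : forall x y r : R, 0 <= x -> 0 <= y -> (x * y) `^ r = x `^ r * y `^ r.
  by move=> x y r x0 y0; rewrite powRM.
have pDh : forall (z : R) p q, 0 < z -> z `^ (p + q) = z `^ p * z `^ q.
  by move=> z p q z0; rewrite powRD//; apply/implyP => _; rewrite gt_eqF.
rewrite tu um mv.
rewrite pM ?ler0n//; last exact: ltW.
have hmu : (h * 2^-1) `^ mu = (h * 2^-1) `^ nu * (h * 2^-1) `^ (mu - nu).
  by rewrite -pDh// addrC subrK.
have E : ((N - k)%:R : R) `^ (- lam) * h `^ (- lam) * (h * 2^-1) `^ nu *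
   (h * 2^-1) `^ (mu - nu) * m `^ (- eps)
   = (m `^ (- eps)) * (((N - k)%:R : R) `^ (- lam) * h `^ (- lam) * (h * 2^-1) `^ mu).
  by rewrite hmu; ring.
rewrite E mulrA.
have X0 : 0 <= s `^ om * m `^ (- eps) by rewrite mulr_ge0 ?powR_ge0.
have Y0 : 0 <= ((N - k)%:R : R) `^ (- lam) * h `^ (- lam) * (h * 2^-1) `^ mu.
  by rewrite !mulr_ge0 ?powR_ge0.
have HX : s `^ om * m `^ (- eps) <= (k.+1%:R : R) `^ (- b) * (h * 2^-1) `^ (- b).
  apply: (le_trans (@sm_le s m om eps s0 sm m0 m1 om0)).
  rewrite -pM ?ler0n//; last exact: ltW.
  apply: powN_le => //.
    by rewrite mulr_gt0// ltr0n.
  rewrite hm -natr1; nra.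
have HY : ((N - k)%:R : R) `^ (- lam) * h `^ (- lam) * (h * 2^-1) `^ mu <=
    ((N - k)%:R : R) `^ (- al) * h `^ (- lam) * (h * 2^-1) `^ mu.
  by rewrite ler_wpM2r ?powR_ge0// ler_wpM2r ?powR_ge0// powN_ge1.
apply: (le_trans (ler_pM X0 Y0 HX HY)).
rewrite le_eqVlt; apply/orP; left; apply/eqP.
have pMh : forall r, (h * 2^-1) `^ r = h `^ r * (2^-1) `^ r.
  by move=> r; apply: pM; [exact: ltW | rewrite invr_ge0].
rewrite !pMh.
rewrite !pDh//.
ring.
Qed.

Lemma powRV (y r : R) : 0 < y -> (y^-1) `^ r = (y `^ r)^-1.
Proof.
by move=> y0; rewrite -powR_inv1 ?ltW// -powRrM mulN1r powRN.
Qed.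

Lemma pow2n (n : nat) (x : R) : (2 ^+ n : R) `^ x = (2 `^ x) ^+ n.
Proof.
by rewrite -powR_mulrn// powRAC powR_mulrn// powR_ge0.
Qed.

Lemma llem (mu lam nu eps om al s t : R) (n : nat) :
  0 <= nu <= mu -> 0 <= al <= lam -> al < 1 -> 0 <= om -> 0 <= eps < 1 ->
  0 <= s -> s < t -> t <= 1 ->
  \sum_(0 <= k < 2 ^ n)
    s `^ om * (`|t - dyadic_pt s t n k| `^ (- lam)
       * `|dyadic_pt s t n k - dyadic_pt s t n.+1 k.*2.+1| `^ nu
       * `|dyadic_pt s t n.+1 k.*2.+1 - dyadic_pt s t n k.+1| `^ (mu - nu)
       * dyadic_pt s t n.+1 k.*2.+1 `^ (- eps))
  <= (2^-1) `^ (mu - pospart (eps - om)) * Kc al (pospart (eps - om))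
     * (t - s) `^ (mu - lam - pospart (eps - om))
     * (2 `^ (1 - al - pospart (eps - om) - (mu - lam - pospart (eps - om)))) ^+ n.
Proof.
move=> hnu hal al1 om0 /andP[eps0 eps1] s0 st t1.
set b := pospart (eps - om).
have b0 : 0 <= b by rewrite /b /pospart le_max lexx orbT.
have b1 : b < 1 by rewrite /b /pospart gt_max ltr01 andbT; lra.
set N := (2 ^ n)%N.
have NE : (N%:R : R) = 2 ^+ n by rewrite /N natrX.
have N0 : (0 < N)%N by rewrite /N expn_gt0.
have NR0 : (0 : R) < 2 ^+ n by rewrite exprn_gt0.
set h := (t - s) / 2 ^+ n.
have h0 : 0 < h by rewrite /h divr_gt0// subr_gt0.
have ptE : forall k, dyadic_pt s t n k = s + k%:R * h.
  by move=> k; rewrite /dyadic_pt /h mulrA.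
have pt1E : forall k, dyadic_pt s t n.+1 k.*2.+1 = s + (k%:R + 2^-1) * h.
  move=> k; rewrite /dyadic_pt /h -natr1 -muln2 natrM exprS; field.
  by rewrite gt_eqF.
apply: (@le_trans _ _ (\sum_(0 <= k < N) (2^-1) `^ (mu - b) *
     (((N - k)%:R : R) `^ (- al) * (k.+1%:R : R) `^ (- b)) * h `^ (mu - lam - b))).
  apply: ler_sum_nat => k /andP[_ kN].
  apply: (@plem mu lam nu eps om al s h t _ _ _ N k) => //.
  - rewrite /N natrX /h mulrC divfK ?gt_eqF//; ring.
rewrite -big_distrl -big_distrr /=.
have al0 : 0 <= al by case/andP: hal.
have aa : 0 <= al < 1 by rewrite al0 al1.
have bb : 0 <= b < 1 by rewrite b0 b1.
apply: (le_trans (ler_wpM2r (powR_ge0 _ _) (ler_wpM2l (powR_ge0 _ _) (@ssum al b N aa bb N0)))).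
rewrite le_eqVlt; apply/orP; left; apply/eqP.
rewrite /N natrX /h powRM; last 2 first.
- by rewrite subr_ge0 ltW.
- by rewrite invr_ge0 ltW.
rewrite (@powRV (2 ^+ n) (mu - lam - b) NR0) -pow2n (@powRB R (2 ^+ n) (1 - al - b) (mu - lam - b)); last first.
  by apply/implyP => _; rewrite gt_eqF.
field; rewrite gt_eqF// powR_gt0//.
Qed.

Lemma q_lt1 (x : R) : x < 0 -> 2 `^ x < 1.
Proof.
move=> x0; rewrite /powR (_ : ((2:R) == 0) = false); last by rewrite pnatr_eq0.
rewrite expR_lt1.
have l2 : 0 < ln (2:R) by apply: ln_gt0; rewrite ltr1n.
nra.
Qed.

Definition Ci (mu lam eps om al : R) :=
  let b := pospart (eps - om) in
  (2^-1) `^ (mu - b) * Kc al b * (1 - 2 `^ (1 - al - b - (mu - lam - b)))^-1.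

Lemma Ci_ge0 mu lam eps om al : 0 <= al < 1 -> 0 <= eps < 1 -> 0 <= om ->
  1 - al - mu + lam < 0 -> 0 <= Ci mu lam eps om al.
Proof.
move=> /andP[a0 a1] /andP[e0 e1] om0 hq; rewrite /Ci.
set b := pospart (eps - om).
have b1 : b < 1 by rewrite /b /pospart gt_max ltr01 andbT; lra.
have q1 : 2 `^ (1 - al - b - (mu - lam - b)) < 1 by apply: q_lt1; lra.
have K0 : 0 <= Kc al b.
  by rewrite /Kc addr_ge0// mulr_ge0 ?powR_ge0// invr_ge0 subr_ge0 ltW.
apply: mulr_ge0; first by rewrite mulr_ge0 ?powR_ge0.
by rewrite invr_ge0 subr_ge0 ltW.
Qed.

Lemma glem (mu lam nu eps om al s t : R) (M : nat) :
  0 <= nu <= mu -> 0 <= al <= lam -> al < 1 -> 0 <= om -> 0 <= eps < 1 ->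
  1 - al - mu + lam < 0 ->
  0 <= s -> s < t -> t <= 1 ->
  \sum_(0 <= n < M) \sum_(0 <= k < 2 ^ n)
    s `^ om * (`|t - dyadic_pt s t n k| `^ (- lam)
       * `|dyadic_pt s t n k - dyadic_pt s t n.+1 k.*2.+1| `^ nu
       * `|dyadic_pt s t n.+1 k.*2.+1 - dyadic_pt s t n k.+1| `^ (mu - nu)
       * dyadic_pt s t n.+1 k.*2.+1 `^ (- eps))
  <= Ci mu lam eps om al * (t - s) `^ (mu - lam - pospart (eps - om)).
Proof.
move=> hnu hal al1 om0 he hq s0 st t1.
apply: (le_trans (ler_sum_nat (fun n _ => @llem mu lam nu eps om al s t n hnu hal al1 om0 he s0 st t1))).
set b := pospart (eps - om).
have b1 : b < 1 by case/andP: he => e0 e1; rewrite /b /pospart gt_max ltr01 andbT; lra.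
set q := 2 `^ (1 - al - b - (mu - lam - b)).
have q1 : q < 1 by apply: q_lt1; lra.
have q0 : 0 < q by rewrite powR_gt0.
set a := (2^-1) `^ (mu - b) * Kc al b * (t - s) `^ (mu - lam - b).
have a0 : 0 <= a.
  have K0 : 0 <= Kc al b.
    case/andP: hal => a0 _.
    by rewrite /Kc addr_ge0// mulr_ge0 ?powR_ge0// invr_ge0 subr_ge0 ltW.
  by rewrite /a !mulr_ge0 ?powR_ge0.
have := @geometric_le_lim R M a q a0 q0; rewrite ger0_norm; last exact: ltW.
move=> /(_ q1).
rewrite seriesEnat /= /Ci -/b -/q => H; apply: (le_trans H).
by rewrite /a le_eqVlt; apply/orP; left; apply/eqP; ring.
Qed.

Lemma sum_pairs (V : zmodType) (f : nat -> V) (N : nat) :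
  \sum_(0 <= k < N.*2) f k = \sum_(0 <= k < N) (f k.*2 + f k.*2.+1).
Proof.
elim: N => [|N IH]; first by rewrite !big_geq.
by rewrite doubleS !big_nat_recr //= IH addrA.
Qed.

Lemma pt2E (s t : R) n k : dyadic_pt s t n.+1 k.*2 = dyadic_pt s t n k.
Proof.
rewrite /dyadic_pt -muln2 natrM exprS; congr (_ + _); field.
by rewrite expf_neq0// pnatr_eq0.
Qed.

Lemma dyadic_step (X : normedModType R) (J : R -> R -> X) s t n :
  dyadic_sum J s t n - dyadic_sum J s t n.+1 =
  \sum_(0 <= k < 2 ^ n) deltaJ J (dyadic_pt s t n k.+1)
       (dyadic_pt s t n.+1 k.*2.+1) (dyadic_pt s t n k).
Proof.
rewrite /dyadic_sum -!(big_mkord xpredT (fun k => J (dyadic_pt s t _ k.+1) (dyadic_pt s t _ k))).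
rewrite expnS mul2n sum_pairs -sumrB; apply: eq_bigr => k _.
rewrite pt2E -doubleS pt2E /deltaJ.
by rewrite opprD addrA addrAC.
Qed.

Lemma dyadic0 (X : normedModType R) (J : R -> R -> X) s t :
  dyadic_sum J s t 0 = J t s.
Proof.
rewrite /dyadic_sum expn0 big_ord1 /dyadic_pt expr0 !divr1 mul1r mul0r addr0.
by rewrite addrC subrK.
Qed.

Lemma tele_bound (X : normedModType R) (J : R -> R -> X) s t M :
  `|dyadic_sum J s t M - J t s| <=
  \sum_(0 <= n < M) \sum_(0 <= k < 2 ^ n) `|deltaJ J (dyadic_pt s t n k.+1)
       (dyadic_pt s t n.+1 k.*2.+1) (dyadic_pt s t n k)|.
Proof.
elim: M => [|M IH]; first by rewrite big_geq// dyadic0 subrr normr0.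
rewrite big_nat_recr//=.
have -> : dyadic_sum J s t M.+1 - J t s =
   (dyadic_sum J s t M - J t s) - (dyadic_sum J s t M - dyadic_sum J s t M.+1).
  by rewrite opprB [in RHS]addrC addrA subrK.
apply: (le_trans (ler_normB _ _)); apply: lerD => //.
by rewrite dyadic_step; apply: ler_norm_sum.
Qed.

Lemma pt_order (s t : R) n k : s < t -> (k < 2 ^ n)%N ->
  [/\ s <= dyadic_pt s t n k, dyadic_pt s t n k <= dyadic_pt s t n.+1 k.*2.+1,
      dyadic_pt s t n.+1 k.*2.+1 <= dyadic_pt s t n k.+1,
      dyadic_pt s t n k.+1 <= t & s < dyadic_pt s t n.+1 k.*2.+1].
Proof.
move=> st kN.
have NR0 : (0 : R) < 2 ^+ n by rewrite exprn_gt0.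
set h := (t - s) / 2 ^+ n.
have h0 : 0 < h by rewrite /h divr_gt0// subr_gt0.
have ptE : forall k, dyadic_pt s t n k = s + k%:R * h.
  by move=> k'; rewrite /dyadic_pt /h mulrA.
have pt1E : dyadic_pt s t n.+1 k.*2.+1 = s + (k%:R + 2^-1) * h.
  rewrite /dyadic_pt /h -natr1 -muln2 natrM exprS; field.
  by rewrite gt_eqF.
have tE : t = s + (2 ^ n)%:R * h.
  rewrite natrX /h mulrC divfK ?gt_eqF//; ring.
have k0 : 0 <= (k%:R : R) by rewrite ler0n.
have kk : (k.+1%:R : R) = k%:R + 1 by rewrite natr1.
have kN' : (k.+1%:R : R) <= (2 ^ n)%:R by rewrite ler_nat.
by rewrite !ptE pt1E kk; split; nra.
Qed.

End Aux.

Theorem lemma2p13 (R : realType) (l : nat)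
  (mu lam nu eps : 'I_l -> R) (omega : R) :
  (forall i, 1 < mu i) ->
  (forall i, 0 <= lam i < mu i) ->
  (forall i, 0 <= nu i <= mu i) ->
  (forall i, 0 <= eps i < 1) ->
  0 <= omega <= \big[Num.max/0]_(i < l) eps i ->
  (forall i, pospart (eps i - omega) < mu i - lam i) ->
  exists C : R,
  forall (X : completeNormedModType R) (T : R) (J : R -> R -> X)
         (A : 'I_l -> R) (s t : R) (JJ : X),
    0 < T <= 1 ->
    {within [set p : R * R | 0 <= p.2 <= p.1 /\ p.1 <= T],
       continuous (fun p : R * R => J p.1 p.2)} ->
    (forall u, 0 <= u <= T -> J u u = 0) ->
    0 <= s -> s <= t -> t <= T ->
    dyadic_sum J s t n @[n --> \oo] --> JJ ->
    (forall i, 0 <= A i) ->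
    (forall u m v, s <= u -> u <= m -> m <= v -> v <= t -> 0 < m ->
       `|deltaJ J v m u| <=
         \sum_(i < l) A i * `|t - u| `^ (- lam i) * `|u - m| `^ (nu i)
                          * `|m - v| `^ (mu i - nu i) * m `^ (- eps i)) ->
    s `^ omega * `|JJ - J t s| <=
      C * \sum_(i < l) A i * `|t - s| `^ (mu i - lam i - pospart (eps i - omega)).
Proof.
move=> hmu hlam hnu heps /andP[om0 _] hpos.
pose th i := (1 + pospart (1 - mu i + lam i)) / 2.
pose al i := Num.min (lam i) (th i).
have alP : forall i, [/\ 0 <= al i <= lam i, al i < 1 & 1 - al i - mu i + lam i < 0].
  move=> i; have /andP[l0 lm] := hlam i; have m1 := hmu i.
  rewrite /al /th /pospart.
  have [z0|z0] := leP (1 - mu i + lam i) 0;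
  have [h|h] := leP (lam i);
  (split; [apply/andP; split|..]; lra).
pose C := \sum_(i < l) Ci (mu i) (lam i) (eps i) omega (al i).
exists C.
move=> X T J A s t JJ /andP[T0 T1] _ hJ0 s0 st tT hlim hA hdelta.
pose e i := mu i - lam i - pospart (eps i - omega).
have Ci0 : forall i, 0 <= Ci (mu i) (lam i) (eps i) omega (al i).
  move=> i; have [a1 a2 a3] := alP i; apply: Ci_ge0 => //.
  by case/andP: a1 => -> /=.
have C0 : 0 <= C by apply: sumr_ge0 => i _.
have CiC : forall i, Ci (mu i) (lam i) (eps i) omega (al i) <= C.
  move=> i; rewrite /C (bigD1 i)//= lerDl; exact: sumr_ge0.
have S0 : 0 <= \sum_(i < l) A i * `|t - s| `^ (e i).
  by apply: sumr_ge0 => i _; rewrite mulr_ge0 ?powR_ge0.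
have key : forall M, s `^ omega * `|dyadic_sum J s t M - J t s| <=
    C * \sum_(i < l) A i * `|t - s| `^ (e i).
  move=> M; move: st; rewrite le_eqVlt => /predU1P[est|st].
    rewrite -est.
    have Jss : J s s = 0 by apply: hJ0; rewrite s0 est.
    have -> : dyadic_sum J s s M = 0.
      rewrite /dyadic_sum big1// => k _.
      by rewrite /dyadic_pt !subrr !mulr0 !mul0r !addr0.
    rewrite Jss subrr normr0 mulr0; apply: mulr_ge0 => //.
    by apply: sumr_ge0 => i _; rewrite mulr_ge0 ?powR_ge0.
  have t1 : t <= 1 by apply: (le_trans tT).
  pose term i n k := `|t - dyadic_pt s t n k| `^ (- lam i)
       * `|dyadic_pt s t n k - dyadic_pt s t n.+1 k.*2.+1| `^ (nu i)
       * `|dyadic_pt s t n.+1 k.*2.+1 - dyadic_pt s t n k.+1| `^ (mu i - nu i)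
       * dyadic_pt s t n.+1 k.*2.+1 `^ (- eps i).
  apply: (le_trans (ler_wpM2l (powR_ge0 _ _) (tele_bound _ J s t M))).
  apply: (@le_trans _ _ (\sum_(i < l) A i * (\sum_(0 <= n < M) \sum_(0 <= k < 2 ^ n)
               s `^ omega * term i n k))).
    rewrite big_distrr /=.
    apply: (@le_trans _ _ (\sum_(0 <= n < M) \sum_(0 <= k < 2 ^ n) \sum_(i < l)
               A i * (s `^ omega * term i n k))).
      apply: ler_sum_nat => n _; rewrite big_distrr /=.
      apply: ler_sum_nat => k /andP[_ kN].
      have [p1 p2 p3 p4 p5] := pt_order _ _ _ _ st kN.
      have m0 : 0 < dyadic_pt s t n.+1 k.*2.+1 by apply: le_lt_trans p5.
      apply: (le_trans (ler_wpM2l (powR_ge0 _ _) (hdelta _ _ _ p1 p2 p3 p4 m0))).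
      rewrite big_distrr /=; apply: ler_sum => i _.
      by rewrite /term le_eqVlt; apply/orP; left; apply/eqP; ring.
    rewrite le_eqVlt; apply/orP; left; apply/eqP.
    apply: (@eq_trans _ _ (\sum_(0 <= n < M) \sum_(i < l) \sum_(0 <= k < 2 ^ n)
               A i * (s `^ omega * term i n k))).
      by apply: eq_bigr => n _; rewrite exchange_big.
    rewrite exchange_big /=; apply: eq_bigr => i _.
    rewrite big_distrr /=; apply: eq_bigr => n _.
    by rewrite big_distrr.
  rewrite mulr_sumr; apply: ler_sum => i _.
  have [a1 a2 a3] := alP i.
  have := @glem R (mu i) (lam i) (nu i) (eps i) omega (al i) s t M (hnu i) a1 a2 om0 (heps i) a3 s0 st t1.
  rewrite -/(e i) => G.
  apply: (le_trans (ler_wpM2l (hA i) G)).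
  rewrite gtr0_norm ?subr_gt0// mulrCA mulrA.
  rewrite -mulrA; apply: ler_wpM2r; first by rewrite mulr_ge0 ?powR_ge0.
  exact: CiC.
have hc : (s `^ omega * `|dyadic_sum J s t n - J t s|) @[n --> \oo] -->
           s `^ omega * `|JJ - J t s|.
  apply: cvgMl_tmp; apply: cvg_norm; apply: cvgB => //; exact: cvg_cst.
have H := closed_cvg _ (@closed_le R (C * \sum_(i < l) A i * `|t - s| `^ (e i))).
apply: H hc.
by apply: nearW => M; exact: key.
Qed.
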